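(* Let $\tilde f:[-\pi,\pi]\times[-1,1]\to\mathbb{C}$ be a BMC function (defined below). Fix $(\theta^*,\rho^* )\in[0,\pi]\times[0,1]$ and let $$M=\begin{bmatrix}\tilde f(\theta^*-\pi,\rho^* ) & \tilde f(\theta^*,\rho^* )\\ \tilde f(\theta^*-\pi,-\rho^* ) & \tilde f(\theta^*,-\rho^* )\end{bmatrix},$$ and assume $M$ is invertible. Define $\tilde s:[-\pi,\pi]\times[-1,1]\to\mathbb{C}$ by $$\tilde s(\theta,\rho)=\begin{bmatrix}\tilde f(\theta^*-\pi,\rho) & \tilde f(\theta^*,\rho)\end{bmatrix} M^{-1}\begin{bmatrix}\tilde f(\theta,\rho^* )\\ \tilde f(\theta,-\rho^* )\end{bmatrix}.$$ Then $\tilde s$ is also a BMC function. Consequently, the update $\tilde f\leftarrow \tilde f-\tilde s$ (a structure-preserving Gaussian elimination step with $2\times 2$ pivot $M$) maps BMC functions to BMC functions.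
   Context: A function $\tilde f:[-\pi,\pi]\times[-1,1]\to\mathbb{C}$ is called a BMC (block-mirror centrosymmetric) function if there are functions $g,h:[0,\pi]\times[0,1]\to\mathbb{C}$ such that $\tilde f(\theta,\rho)=g(\theta+\pi,\rho)$ for $(\theta,\rho)\in[-\pi,0]\times[0,1]$; $\tilde f(\theta,\rho)=h(\theta,\rho)$ for $(\theta,\rho)\in[0,\pi]\times[0,1]$; $\tilde f(\theta,\rho)=g(\theta,-\rho)$ for $(\theta,\rho)\in[0,\pi]\times[-1,0]$; $\tilde f(\theta,\rho)=h(\theta+\pi,-\rho)$ for $(\theta,\rho)\in[-\pi,0]\times[-1,0]$. Equivalently, $\tilde f(\theta,\rho)=\tilde f(\theta+\pi,-\rho)$ for all $(\theta,\rho)\in[-\pi,0]\times[-1,1]$. *)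

(* Defs.v *)
From HB Require Import structures.
From mathcomp Require Import all_boot all_order all_algebra.
From mathcomp Require Import complex.
From mathcomp Require Import reals trigo.
Set Implicit Arguments. Unset Strict Implicit. Unset Printing Implicit Defensive.
Import Order.TTheory GRing.Theory Num.Theory.
Local Open Scope ring_scope.
Local Open Scope complex_scope.

(* A function [-pi,pi] x [-1,1] -> C is modelled as f : R -> R -> R[i];
   its values outside the rectangle are irrelevant (BMC only constrains
   values inside the rectangle). *)
Definition BMC (R : realType) (f : R -> R -> R[i]) : Prop :=
  exists g h : R -> R -> R[i],
    [/\ (forall th rho, -pi <= th <= 0 -> 0 <= rho <= 1 -> f th rho = g (th + pi) rho),
        (forall th rho, 0 <= th <= pi -> 0 <= rho <= 1 -> f th rho = h th rho),
        (forall th rho, 0 <= th <= pi -> -1 <= rho <= 0 -> f th rho = g th (- rho)) &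
        (forall th rho, -pi <= th <= 0 -> -1 <= rho <= 0 -> f th rho = h (th + pi) (- rho))].

Definition pivotM (R : realType) (f : R -> R -> R[i]) (ths rhos : R) : 'M[R[i]]_2 :=
  \matrix_(i < 2, j < 2)
     f (if j == ord0 then ths - pi else ths) (if i == ord0 then rhos else - rhos).

Definition schur_update (R : realType) (f : R -> R -> R[i]) (ths rhos : R)
    (th rho : R) : R[i] :=
  ((\row_(j < 2) f (if j == ord0 then ths - pi else ths) rho)
     *m invmx (pivotM f ths rhos)
     *m (\col_(i < 2) f th (if i == ord0 then rhos else - rhos))) ord0 ord0.

(* Main.v *)
Require Import Defs.
From HB Require Import structures.
From mathcomp Require Import all_boot all_order all_algebra.
From mathcomp Require Import complex.
From mathcomp Require Import reals trigo.
From mathcomp Require Import lra.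
Import Order.TTheory GRing.Theory Num.Theory.
Set Implicit Arguments. Unset Strict Implicit. Unset Printing Implicit Defensive.
Local Open Scope ring_scope.

Definition symm (R : realType) (f : R -> R -> R[i]) : Prop :=
  forall th rho, -pi <= th <= 0 -> -1 <= rho <= 1 -> f th rho = f (th + pi) (- rho).

Lemma BMC_symm (R : realType) (f : R -> R -> R[i]) : BMC f -> symm f.
Proof.
move=> [g [h [H1 H2 H3 H4]]] th rho Hth /andP[Hr1 Hr2].
have Hth' : 0 <= th + pi <= pi.
  case/andP: Hth => a b; apply/andP; split; lra.
case: (lerP 0 rho) => Hr.
- rewrite H1 //; last by rewrite Hr Hr2.
  rewrite H3 ?opprK //; apply/andP; split; lra.
- rewrite H4 //; last by rewrite Hr1 ltW.
  rewrite H2 //; apply/andP; split; lra.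
Qed.

Lemma symm_BMC (R : realType) (f : R -> R -> R[i]) : symm f -> BMC f.
Proof.
move=> S; exists (fun th rho => f th (- rho)), f; split => th rho Hth Hr.
- rewrite S //; case/andP: Hr => a b; apply/andP; split; lra.
- by [].
- by rewrite opprK.
- rewrite S //; case/andP: Hr => a b; apply/andP; split; lra.
Qed.

Definition Pm (R : realType) : 'M[R[i]]_2 :=
  \matrix_(i < 2, j < 2) (if i == j then 0 else 1).

Lemma PP (R : realType) : Pm R *m Pm R = 1%:M.
Proof.
apply/matrixP => i j; rewrite !mxE !big_ord_recr big_ord0 /= !mxE.
by case: i => [[|[|]]] //= Hi; case: j => [[|[|]]] //= Hj;
  rewrite ?mul0r ?mulr0 ?mul1r ?add0r ?addr0.
Qed.

Theorem lemma3p1 (R : realType) (f : R -> R -> R[i]) (ths rhos : R) :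
  BMC f ->
  0 <= ths <= pi -> 0 <= rhos <= 1 ->
  pivotM f ths rhos \in unitmx ->
  BMC (schur_update f ths rhos) /\
  BMC (fun th rho => f th rho - schur_update f ths rhos th rho).
Proof.
move=> /BMC_symm S /andP[t1 t2] /andP[r1 r2] Mu.
have Ht : -pi <= ths - pi <= 0.
  by apply/andP; split; lra.
have Hr : -1 <= rhos <= 1 by apply/andP; split; lra.
have Hr' : -1 <= - rhos <= 1 by apply/andP; split; lra.
have Ss : symm (schur_update f ths rhos).
  move=> th rho Hth Hrho.
  have Hrho' : -1 <= - rho <= 1.
    by case/andP: Hrho => a b; apply/andP; split; lra.
  rewrite /schur_update.
  set M := pivotM f ths rhos.
  have Erow : (\row_(j < 2) f (if j == ord0 then ths - pi else ths) (- rho))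
     = (\row_(j < 2) f (if j == ord0 then ths - pi else ths) rho) *m Pm R.
    apply/rowP => j; rewrite !mxE !big_ord_recr big_ord0 /= !mxE.
    case: j => [[|[|]]] //= Hj; rewrite ?mul0r ?mulr0 ?mulr1 ?add0r ?addr0.
    - by rewrite S // subrK opprK.
    - by rewrite (S (ths - pi) rho) // subrK.
  have Ecol : (\col_(i < 2) f (th + pi) (if i == ord0 then rhos else - rhos))
     = Pm R *m (\col_(i < 2) f th (if i == ord0 then rhos else - rhos)).
    apply/colP => j; rewrite !mxE !big_ord_recr big_ord0 /= !mxE.
    case: j => [[|[|]]] //= Hj; rewrite ?mul0r ?mulr0 ?mul1r ?add0r ?addr0.
    - by rewrite (S th (- rhos)) // opprK.
    - by rewrite (S th rhos).
  have E1 : f (ths - pi) rhos = f ths (- rhos) by rewrite S // subrK.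
  have E2 : f (ths - pi) (- rhos) = f ths rhos by rewrite S // subrK opprK.
  have EM : Pm R *m M *m Pm R = M.
    apply/matrixP => i j; rewrite !mxE !big_ord_recr !big_ord0 /= !mxE.
    rewrite !big_ord_recr !big_ord0 /= !mxE.
    case: i => [[|[|]]] //= Hi; case: j => [[|[|]]] //= Hj;
      rewrite ?mul0r ?mulr0 ?mul1r ?mulr1 ?add0r ?addr0 //= ?E1 ?E2 //.
  have EMI : M *m (Pm R *m invmx M *m Pm R) = 1%:M.
    rewrite -{1}EM -!mulmxA (mulmxA (Pm R) (Pm R)) PP mul1mx (mulmxA M) (mulmxV Mu) mul1mx PP.
    by [].
  have EI : Pm R *m invmx M *m Pm R = invmx M.
    by rewrite -[LHS]mul1mx -(mulVmx Mu) -(mulmxA (invmx M) M) EMI mulmx1.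
  rewrite Erow Ecol -{1}EI !mulmxA; reflexivity.
split; apply: symm_BMC => //.
by move=> th rho a b /=; rewrite (S th rho a b) (Ss th rho a b).
Qed.
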